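(* Let $L$ be a distributive lattice, $n\ge1$, $a_i,b_i\in L$ with $a_i<b_i$ for $i\in[n]$, $\widehat{\mathbf e}_I\in L^n$ ($I\subseteq[n]$) the tuple with $i$-th component $b_i$ if $i\in I$ and $a_i$ otherwise, $D=\{\widehat{\mathbf e}_I:I\subseteq[n]\}$, and $f\colon D\to L$ satisfying $$f(\widehat{\mathbf e}_{I\cup\{k\}})\wedge a_k\le f(\widehat{\mathbf e}_I)\le f(\widehat{\mathbf e}_{I\setminus\{k\}})\vee b_k\quad\text{for all } I\subseteq[n],\ k\in[n].$$ Then for all $S\subseteq T\subseteq[n]$, $$f(\widehat{\mathbf e}_T)\wedge\bigwedge_{k\in T\setminus S}a_k\le f(\widehat{\mathbf e}_S)\quad\text{and}\quad f(\widehat{\mathbf e}_T)\le f(\widehat{\mathbf e}_S)\vee\bigvee_{k\in T\setminus S}b_k.$$ *)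

(* Defs.v *)
From mathcomp Require Import all_boot all_order.
Set Implicit Arguments. Unset Strict Implicit. Unset Printing Implicit Defensive.
Import Order.TTheory.
Local Open Scope order_scope.

Definition ehat (T : Type) (n : nat) (a b : 'I_n -> T) (I : {set 'I_n})
  : {ffun 'I_n -> T} := [ffun i => if i \in I then b i else a i].

(* Main.v *)
Require Import Defs.
From mathcomp Require Import all_boot all_order.
Import Order.TTheory.
Local Open Scope order_scope.

Lemma big_split1 (disp : Order.disp_t) (L : distrLatticeType disp) (n : nat)
  (op : SemiGroup.com_law L) (x : L) (A : {set 'I_n}) (k : 'I_n) (F : 'I_n -> L) :
  k \in A -> \big[op/x]_(i in A) F i = op (F k) (\big[op/x]_(i in A :\ k) F i).
Proof.
move=> kA.
rewrite (big_rem_AC op x _ _ (mem_index_enum k)) kA.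
rewrite rem_filter ?index_enum_uniq // big_filter_cond.
by apply: congr1; apply: eq_bigl => i; rewrite in_setD1.
Qed.

Lemma big_join_seed (disp : Order.disp_t) (L : distrLatticeType disp) (n : nat)
  (x y : L) (A : {set 'I_n}) (F : 'I_n -> L) :
  \big[Order.join/(x `|` y)]_(i in A) F i = y `|` \big[Order.join/x]_(i in A) F i.
Proof.
elim/big_rec2: _ => [|i u v _ ->]; first by rewrite joinC.
by rewrite joinCA.
Qed.

Theorem lemma3p1 (disp : Order.disp_t) (L : distrLatticeType disp) (n : nat)
  (hn : (1 <= n)%N) (a b : 'I_n -> L) (hab : forall i, a i < b i)
  (f : {ffun 'I_n -> L} -> L)
  (hf : forall (I : {set 'I_n}) (k : 'I_n),
      f (ehat a b (k |: I)) `&` a k <= f (ehat a b I) /\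
      f (ehat a b I) <= f (ehat a b (I :\ k)) `|` b k) :
  forall S T : {set 'I_n}, S \subset T ->
    \big[Order.meet/f (ehat a b T)]_(k in T :\: S) a k <= f (ehat a b S) /\
    f (ehat a b T) <= \big[Order.join/f (ehat a b S)]_(k in T :\: S) b k.
Proof.
move=> S T.
move Em: #|T :\: S| => m.
elim: m S Em => [|m IH] S Em sST.
  have E0 : T :\: S = set0 by apply/eqP; rewrite -cards_eq0 Em.
  have ETS : T = S.
    apply/eqP; rewrite eqEsubset sST andbT.
    by rewrite -setD_eq0 E0.
  by rewrite E0 !big_set0 ETS.
have [k kTS] : exists k, k \in T :\: S.
  apply/set0Pn; by rewrite -card_gt0 Em.
move: (kTS); rewrite in_setD => /andP [kS kT].
have ED : (T :\: S) :\ k = T :\: (k |: S).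
  by apply/setP => i; rewrite !inE; case: (i == k); rewrite ?andbF ?andbT.
have Em' : #|T :\: (k |: S)| = m.
  have H := cardsD1 k (T :\: S); rewrite kTS Em ED add1n in H; by case: H.
have sST' : k |: S \subset T by rewrite subUset sub1set kT sST.
have [IH1 IH2] := IH _ Em' sST'.
have [hf1 _] := hf S k.
have [_ hf2] := hf (k |: S) k.
have ES : (k |: S) :\ k = S.
  by apply/setP => i; rewrite !inE; case: eqP => // ->; rewrite (negbTE kS).
rewrite ES in hf2.
split.
  rewrite (@big_split1 _ _ _ _ _ _ k _ kTS) ED.
  apply: le_trans hf1.
  by rewrite meetC; apply: leI2.
rewrite (@big_split1 _ _ _ _ _ _ k _ kTS) ED.
apply: (le_trans IH2).
suff H : \big[Order.join/f (ehat a b (k |: S))]_(i in T :\: (k |: S)) b i <=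
         \big[Order.join/(f (ehat a b S) `|` b k)]_(i in T :\: (k |: S)) b i.
  by rewrite big_join_seed in H.
elim/big_rec2: _ => // i u v _ uv.
by apply: leU2.
Qed.
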